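(* Let $0=t_0<\dots<t_N=T$, $\tau_k=t_k-t_{k-1}$, $r_k=\tau_k/\tau_{k-1}$ ($2\le k\le N$), with all $r_k>0$. Let $u(x,t)$ satisfy $\|\partial_t^ku(\cdot,t)\|\le\bar Ct^{\alpha-k}$ for $t\in(0,T]$, $k=1,2,3$, with $\bar C>0$ and $\frac12\le\alpha\le1$. Define the truncation error $\eta^n:=\mathcal D_2u(\cdot,t_n)-\partial_tu(\cdot,t_n)$, where $\mathcal D_2v^n=\sum_{k=1}^nb^{(n)}_{n-k}(v^k-v^{k-1})$ (so $\mathcal D_2v^1=(v^1-v^0)/\tau_1$ and, for $n\ge2$, $\mathcal D_2v^n=\frac{1+2r_n}{\tau_n(1+r_n)}(v^n-v^{n-1})-\frac{r_n^2}{\tau_n(1+r_n)}(v^{n-1}-v^{n-2})$). Then $$\|\eta^j\|\le2\bar C\tau_j^2t_{j-1}^{\alpha-3}+\tfrac12\bar C\tau_{j-1}^2t_{j-2}^{\alpha-3},\ j\ge3;\qquad \|\eta^2\|\le\big(2r_2^2+1/(2\alpha)\big)\bar C\tau_1^{\alpha-1};\qquad \|\eta^1\|\le\frac{\bar C}{\alpha}\tau_1^{\alpha-1}.$$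
   Context: BDF2 kernels: $b^{(1)}_0=1/\tau_1$; for $n\ge2$, $b^{(n)}_0=\frac{1+2r_n}{\tau_n(1+r_n)}$, $b^{(n)}_1=-\frac{r_n^2}{\tau_n(1+r_n)}$, $b^{(n)}_j=0$ for $j\ge2$. In the paper $\|\cdot\|$ is the discrete $L^2$ norm over interior spatial grid points, $\|v\|=(\sum_{i=1}^{M-1}hv_i^2)^{1/2}$. *)

(* Defs.v *)
From Stdlib Require Import Reals.
From Coquelicot Require Import Coquelicot.
Open Scope R_scope.

Definition dnorm (M : nat) (h : R) (v : nat -> R) : R :=
  sqrt (sum_n_m (fun i => h * (v i) ^ 2) 1 (M - 1)%nat).

Definition tau (t : nat -> R) (k : nat) : R := t k - t (k - 1)%nat.
Definition ratio (t : nat -> R) (k : nat) : R := tau t k / tau t (k - 1)%nat.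

Definition bdf2_kernel (t : nat -> R) (n j : nat) : R :=
  match n with
  | O => 0
  | S O => match j with O => 1 / tau t 1 | _ => 0 end
  | _ => match j with
         | O => (1 + 2 * ratio t n) / (tau t n * (1 + ratio t n))
         | S O => - (ratio t n ^ 2) / (tau t n * (1 + ratio t n))
         | _ => 0
         end
  end.

Definition D2 (t : nat -> R) (v : nat -> R) (n : nat) : R :=
  sum_n_m (fun k => bdf2_kernel t n (n - k)%nat * (v k - v (k - 1)%nat)) 1 n.

(* ud k i s = k-th time derivative of the i-th grid component of u at time s;
   truncation error eta^n = D_2 u(.,t_n) - d_t u(.,t_n) (componentwise) *)
Definition eta (t : nat -> R) (ud : nat -> nat -> R -> R) (n : nat) : nat -> R :=
  fun i => D2 t (fun k => ud O i (t k)) n - ud 1%nat i (t n).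

(* Main.v *)
Require Import Defs.
From Stdlib Require Import Reals Lra Lia.
From Coquelicot Require Import Coquelicot.
Open Scope R_scope.

Lemma mono_right (H dH : R -> R) x y : x <= y ->
  (forall s, x <= s <= y -> is_derive H s (dH s)) ->
  (forall s, x <= s <= y -> 0 <= dH s) -> H x <= H y.
Proof.
  intros Hxy Hd Hp.
  destruct (MVT_gen H x y dH) as [c [Hc He]].
  - intros s Hs. rewrite Rmin_left, Rmax_right in Hs by lra. apply Hd; lra.
  - intros s Hs. rewrite Rmin_left, Rmax_right in Hs by lra.
    apply continuity_pt_filterlim. apply (ex_derive_continuous (K:=R_AbsRing) (V:=R_NormedModule)). exists (dH s). apply Hd; lra.
  - rewrite Rmin_left, Rmax_right in Hc by lra.
    assert (0 <= dH c * (y - x)) by (apply Rmult_le_pos; [apply Hp; lra| lra]). lra.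
Qed.

Lemma cmp_right (g dg : R -> R) a x M n : a <= x -> g a = 0 ->
  (forall y, a <= y <= x -> is_derive g y (dg y)) ->
  (forall y, a <= y <= x -> Rabs (dg y) <= M * (y - a) ^ n) ->
  Rabs (g x) <= M * (x - a) ^ (S n) / INR (S n).
Proof.
  intros Hax Hg Hd Hb.
  set (P := fun y => M * (y - a) ^ (S n) / INR (S n)).
  assert (HP : forall y, is_derive P y (M * (y - a) ^ n)).
  { intros y. unfold P. assert (Hk : 0 < INR (S n)) by (apply lt_0_INR; lia). auto_derive. auto. simpl pred. change (match n with 0%nat => 1 | S _ => INR n + 1 end) with (INR (S n)). unfold Rminus. field. lra. }
  assert (P0 : P a = 0) by (unfold P; rewrite Rminus_diag, pow_i by lia; unfold Rdiv; ring).
  apply Rabs_le. split.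
  - assert (Hm : P a + g a <= P x + g x).
    { apply (mono_right (fun y => P y + g y) (fun y => M * (y - a) ^ n + dg y)); auto.
      intros. apply @is_derive_plus. apply HP. apply Hd; lra.
      intros s Hs. specialize (Hb s Hs). apply Rabs_le_between in Hb. lra. }
    unfold P at 2 in Hm. lra.
  - assert (Hm : P a - g a <= P x - g x).
    { apply (mono_right (fun y => P y - g y) (fun y => M * (y - a) ^ n - dg y)); auto.
      intros. apply @is_derive_minus. apply HP. apply Hd; lra.
      intros s Hs. specialize (Hb s Hs). apply Rabs_le_between in Hb. lra. }
    unfold P at 2 in Hm. lra.
Qed.

Lemma cmp_left (g dg : R -> R) a x M n : x <= a -> g a = 0 ->
  (forall y, x <= y <= a -> is_derive g y (dg y)) ->
  (forall y, x <= y <= a -> Rabs (dg y) <= M * (a - y) ^ n) ->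
  Rabs (g x) <= M * (a - x) ^ (S n) / INR (S n).
Proof.
  intros Hax Hg Hd Hb.
  set (P := fun y => - (M * (a - y) ^ (S n) / INR (S n))).
  assert (HP : forall y, is_derive P y (M * (a - y) ^ n)).
  { intros y. unfold P. assert (Hk : 0 < INR (S n)) by (apply lt_0_INR; lia). auto_derive. auto. simpl pred. change (match n with 0%nat => 1 | S _ => INR n + 1 end) with (INR (S n)). unfold Rminus. field. lra. }
  assert (P0 : P a = 0) by (unfold P; rewrite Rminus_diag, pow_i by lia; unfold Rdiv; ring).
  apply Rabs_le. split.
  - assert (Hm : P x - g x <= P a - g a).
    { apply (mono_right (fun y => P y - g y) (fun y => M * (a - y) ^ n - dg y)); auto.
      intros. apply @is_derive_minus. apply HP. apply Hd; lra.
      intros s Hs. specialize (Hb s Hs). apply Rabs_le_between in Hb. lra. }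
    unfold P at 1 in Hm. lra.
  - assert (Hm : P x + g x <= P a + g a).
    { apply (mono_right (fun y => P y + g y) (fun y => M * (a - y) ^ n + dg y)); auto.
      intros. apply @is_derive_plus. apply HP. apply Hd; lra.
      intros s Hs. specialize (Hb s Hs). apply Rabs_le_between in Hb. lra. }
    unfold P at 1 in Hm. lra.
Qed.
Lemma is_derive_eq (f : R -> R) (x l l' : R) : is_derive f x l -> l = l' -> is_derive f x l'.
Proof. intros H <-; exact H. Qed.

Lemma dR1 (f : R -> R) df c d q y : is_derive f y df ->
  is_derive (fun y => f y - c - (y - q) * d) y (df - d).
Proof.
  intros H.
  assert (H2 : is_derive (fun y => c + (y - q) * d) y d) by (auto_derive; auto; ring).
  eapply is_derive_eq. eapply is_derive_ext.
  2: apply (@is_derive_minus R_AbsRing R_NormedModule _ _ y _ _ H H2).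
  intros t. unfold minus, plus, opp; simpl. ring.
  unfold minus, plus, opp; simpl. ring.
Qed.

Lemma dR0 (f : R -> R) df c d e q y : is_derive f y df ->
  is_derive (fun y => f y - c - (y - q) * d - (y - q) ^ 2 / 2 * e) y (df - d - (y - q) * e).
Proof.
  intros H.
  assert (H2 : is_derive (fun y => c + (y - q) * d + (y - q) ^ 2 / 2 * e) y (d + (y - q) * e))
    by (auto_derive; auto; simpl; field).
  eapply is_derive_eq. eapply is_derive_ext.
  2: apply (@is_derive_minus R_AbsRing R_NormedModule _ _ y _ _ H H2).
  intros t. unfold minus, plus, opp; simpl. ring.
  unfold minus, plus, opp; simpl. ring.
Qed.

Lemma dR2 (f : R -> R) df c y : is_derive f y df ->
  is_derive (fun y => f y - c) y df.
Proof.
  intros H. eapply is_derive_eq. eapply is_derive_ext.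
  2: apply (@is_derive_minus R_AbsRing R_NormedModule _ _ y _ _ H (is_derive_const c y)).
  intros t. unfold minus, plus, opp; simpl. ring.
  unfold minus, plus, opp, zero; simpl. ring.
Qed.

Definition Dchain (f0 f1 f2 f3 : R -> R) (lo hi : R) :=
  forall s, lo <= s <= hi ->
    is_derive f0 s (f1 s) /\ is_derive f1 s (f2 s) /\ is_derive f2 s (f3 s).

Lemma taylor_right f0 f1 f2 f3 q x M : q <= x -> Dchain f0 f1 f2 f3 q x ->
  (forall s, q <= s <= x -> Rabs (f3 s) <= M) ->
  Rabs (f0 x - f0 q - (x - q) * f1 q - (x - q) ^ 2 / 2 * f2 q) <= M * (x - q) ^ 3 / 6 /\
  Rabs (f1 x - f1 q - (x - q) * f2 q) <= M * (x - q) ^ 2 / 2.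
Proof.
  intros Hqx HD HM.
  assert (B2 : forall y, q <= y <= x -> Rabs (f2 y - f2 q) <= M * (y - q) ^ 1).
  { intros y Hy. pose proof (cmp_right (fun y => f2 y - f2 q) f3 q y M 0) as H.
    replace (M * (y - q) ^ 1) with (M * (y - q) ^ 1 / INR 1) by (simpl; field).
    apply H. lra. lra. intros; apply dR2, HD; lra. intros; simpl; rewrite Rmult_1_r; apply HM; lra. }
  assert (B1 : forall y, q <= y <= x -> Rabs (f1 y - f1 q - (y - q) * f2 q) <= M / 2 * (y - q) ^ 2).
  { intros y Hy. pose proof (cmp_right (fun y => f1 y - f1 q - (y - q) * f2 q) (fun y => f2 y - f2 q) q y M 1) as H.
    replace (M / 2 * (y - q) ^ 2) with (M * (y - q) ^ 2 / INR 2) by (simpl; field).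
    apply H. lra. lra. intros; apply dR1, HD; lra. intros; apply B2; lra. }
  split.
  - pose proof (cmp_right (fun y => f0 y - f0 q - (y - q) * f1 q - (y - q) ^ 2 / 2 * f2 q)
       (fun y => f1 y - f1 q - (y - q) * f2 q) q x (M / 2) 2) as H.
    replace (M * (x - q) ^ 3 / 6) with (M / 2 * (x - q) ^ 3 / INR 3) by (simpl; field).
    apply H. lra. lra. intros; apply dR0, HD; lra. intros; apply B1; lra.
  - replace (M * (x - q) ^ 2 / 2) with (M / 2 * (x - q) ^ 2) by field. apply B1; lra.
Qed.

Lemma taylor_left f0 f1 f2 f3 q x M : x <= q -> Dchain f0 f1 f2 f3 x q ->
  (forall s, x <= s <= q -> Rabs (f3 s) <= M) ->
  Rabs (f0 x - f0 q - (x - q) * f1 q - (x - q) ^ 2 / 2 * f2 q) <= M * (q - x) ^ 3 / 6.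
Proof.
  intros Hqx HD HM.
  assert (B2 : forall y, x <= y <= q -> Rabs (f2 y - f2 q) <= M * (q - y) ^ 1).
  { intros y Hy. pose proof (cmp_left (fun y => f2 y - f2 q) f3 q y M 0) as H.
    replace (M * (q - y) ^ 1) with (M * (q - y) ^ 1 / INR 1) by (simpl; field).
    apply H. lra. lra. intros; apply dR2, HD; lra. intros; simpl; rewrite Rmult_1_r; apply HM; lra. }
  assert (B1 : forall y, x <= y <= q -> Rabs (f1 y - f1 q - (y - q) * f2 q) <= M / 2 * (q - y) ^ 2).
  { intros y Hy. pose proof (cmp_left (fun y => f1 y - f1 q - (y - q) * f2 q) (fun y => f2 y - f2 q) q y M 1) as H.
    replace (M / 2 * (q - y) ^ 2) with (M * (q - y) ^ 2 / INR 2) by (simpl; field).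
    apply H. lra. lra. intros; apply dR1, HD; lra. intros; apply B2; lra. }
  pose proof (cmp_left (fun y => f0 y - f0 q - (y - q) * f1 q - (y - q) ^ 2 / 2 * f2 q)
       (fun y => f1 y - f1 q - (y - q) * f2 q) q x (M / 2) 2) as H.
  replace (M * (q - x) ^ 3 / 6) with (M / 2 * (q - x) ^ 3 / INR 3) by (simpl; field).
  apply H. lra. lra. intros; apply dR0, HD; lra. intros; apply B1; lra.
Qed.


Lemma right_part f0 f1 f2 f3 q r M a : q < r -> Dchain f0 f1 f2 f3 q r ->
  (forall s, q <= s <= r -> Rabs (f3 s) <= M) -> 0 <= a -> a * (r - q) <= 2 ->
  Rabs (a * (f0 r - f0 q - (r - q) * f1 q - (r - q) ^ 2 / 2 * f2 q)
        - (f1 r - f1 q - (r - q) * f2 q)) <= 5 / 6 * M * (r - q) ^ 2.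
Proof.
  intros Hqr HD HM Ha Hat.
  destruct (taylor_right f0 f1 f2 f3 q r M) as [H0 H1]; auto; try lra.
  assert (HM0 : 0 <= M) by (specialize (HM q ltac:(lra)); pose proof (Rabs_pos (f3 q)); lra).
  eapply Rle_trans. apply Rabs_triang. rewrite Rabs_Ropp, Rabs_mult, (Rabs_right a) by lra.
  assert (a * Rabs (f0 r - f0 q - (r - q) * f1 q - (r - q) ^ 2 / 2 * f2 q) <= a * (M * (r - q) ^ 3 / 6))
    by (apply Rmult_le_compat_l; auto).
  assert (a * (M * (r - q) ^ 3 / 6) <= M * (r - q) ^ 2 / 3).
  { replace (a * (M * (r - q) ^ 3 / 6)) with ((a * (r - q)) * (M * (r - q) ^ 2) / 6) by field.
    assert (0 <= M * (r - q) ^ 2) by (apply Rmult_le_pos; auto; apply pow2_ge_0).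
    assert (a * (r - q) * (M * (r - q) ^ 2) <= 2 * (M * (r - q) ^ 2)) by (apply Rmult_le_compat_r; auto).
    lra. }
  lra.
Qed.

Lemma regular f0 f1 f2 f3 p q r M1 M2 : p < q -> q < r -> Dchain f0 f1 f2 f3 p r ->
  (forall s, q <= s <= r -> Rabs (f3 s) <= M1) ->
  (forall s, p <= s <= q -> Rabs (f3 s) <= M2) ->
  let rho := (r - q) / (q - p) in
  Rabs ((1 + 2 * rho) / ((r - q) * (1 + rho)) * (f0 r - f0 q)
        + (- rho ^ 2) / ((r - q) * (1 + rho)) * (f0 q - f0 p) - f1 r)
   <= 2 * M1 * (r - q) ^ 2 + 1 / 2 * M2 * (q - p) ^ 2.
Proof.
  intros Hpq Hqr HD HM1 HM2 rho.
  assert (Hrho : 0 < rho) by (unfold rho; apply Rdiv_lt_0_compat; lra).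
  set (a := (1 + 2 * rho) / ((r - q) * (1 + rho))).
  set (b := rho ^ 2 / ((r - q) * (1 + rho))).
  set (R0r := f0 r - f0 q - (r - q) * f1 q - (r - q) ^ 2 / 2 * f2 q).
  set (R1r := f1 r - f1 q - (r - q) * f2 q).
  set (R0p := f0 p - f0 q - (p - q) * f1 q - (p - q) ^ 2 / 2 * f2 q).
  assert (Ha : 0 <= a) by (unfold a; apply Rlt_le, Rdiv_lt_0_compat; nra).
  assert (Hat : a * (r - q) <= 2).
  { unfold a. replace ((1 + 2 * rho) / ((r - q) * (1 + rho)) * (r - q)) with ((1 + 2 * rho) / (1 + rho)) by (field; lra).
    apply Rmult_le_reg_r with (1 + rho). lra. unfold Rdiv. rewrite Rmult_assoc, Rinv_l by lra. lra. }
  assert (HR := right_part f0 f1 f2 f3 q r M1 a Hqr ltac:(intros s Hs; apply HD; lra) HM1 Ha Hat).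
  assert (HL := taylor_left f0 f1 f2 f3 q p M2 ltac:(lra) ltac:(intros s Hs; apply HD; lra) HM2).
  fold R0r R1r in HR. fold R0p in HL.
  match goal with |- Rabs ?X <= _ => assert (Hid : X = (a * R0r - R1r) + b * R0p) end.
  { unfold a, b, R0r, R1r, R0p, rho. field. lra. }
  rewrite Hid.
  assert (Hb : 0 <= b) by (unfold b; apply Rlt_le, Rdiv_lt_0_compat; nra).
  assert (HbR : Rabs (b * R0p) <= b * (M2 * (q - p) ^ 3 / 6)) by (rewrite Rabs_mult, (Rabs_right b) by lra; apply Rmult_le_compat_l; auto).
  assert (HM2p : 0 <= M2) by (specialize (HM2 p ltac:(lra)); pose proof (Rabs_pos (f3 p)); lra).
  assert (Hbe : b * (M2 * (q - p) ^ 3 / 6) <= 1 / 6 * M2 * (q - p) ^ 2).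
  { replace (b * (M2 * (q - p) ^ 3 / 6)) with (rho / (1 + rho) * (M2 * (q - p) ^ 2) / 6)
      by (unfold b, rho; field; lra).
    assert (0 <= M2 * (q - p) ^ 2) by (apply Rmult_le_pos; auto; apply pow2_ge_0).
    assert (rho / (1 + rho) <= 1).
    { replace (rho / (1 + rho)) with (1 - 1 / (1 + rho)) by (field; lra).
      assert (0 < 1 / (1 + rho)) by (apply Rdiv_lt_0_compat; lra). lra. }
    assert (rho / (1 + rho) * (M2 * (q - p) ^ 2) <= 1 * (M2 * (q - p) ^ 2)) by (apply Rmult_le_compat_r; auto).
    lra. }
  assert (0 <= M1 * (r - q) ^ 2) by (assert (0 <= M1) by (specialize (HM1 r ltac:(lra)); pose proof (Rabs_pos (f3 r)); lra); apply Rmult_le_pos; auto; apply pow2_ge_0).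
  set (X := M1 * (r - q) ^ 2) in *. set (Y := M2 * (q - p) ^ 2) in *.
  replace (2 * M1 * (r - q) ^ 2 + 1 / 2 * M2 * (q - p) ^ 2) with (2 * X + 1 / 2 * Y) by (unfold X, Y; field).
  replace (5 / 6 * M1 * (r - q) ^ 2) with (5 / 6 * X) in HR by (unfold X; field).
  replace (1 / 6 * M2 * (q - p) ^ 2) with (1 / 6 * Y) in Hbe by (unfold Y; field).
  assert (0 <= Y) by (unfold Y; apply Rmult_le_pos; auto; apply pow2_ge_0).
  eapply Rle_trans. apply Rabs_triang. lra.
Qed.


Lemma exp_mono x y : x <= y -> exp x <= exp y.
Proof. intros H. destruct (Rle_lt_or_eq_dec _ _ H). left; now apply exp_increasing. subst; lra. Qed.

Lemma Rpower_pos x e : 0 < Rpower x e.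
Proof. unfold Rpower; apply exp_pos. Qed.

Lemma Rpower_mono_neg x y e : 0 < x <= y -> e <= 0 -> Rpower y e <= Rpower x e.
Proof.
  intros Hx He. unfold Rpower. apply exp_mono.
  assert (ln x <= ln y) by (apply ln_le; lra). nra.
Qed.

Lemma Rpower_shift x e : 0 < x -> x * Rpower x (e - 1) = Rpower x e.
Proof.
  intros Hx. replace e with ((e - 1) + 1) at 2 by ring. rewrite Rpower_plus, Rpower_1 by auto. ring.
Qed.

Lemma small_pow a : 1 / 2 <= a -> forall d, 0 < d -> exists e, 0 < e /\ forall s, 0 < s < e -> Rpower s a < d.
Proof.
  intros Ha d Hd. exists (Rmin 1 (d ^ 2)). split.
  apply Rmin_pos; [lra| apply pow_lt; auto].
  intros s [Hs Hse].
  assert (Hs1 : s < 1) by (eapply Rlt_le_trans; [apply Hse| apply Rmin_l]).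
  assert (Hs2 : s < d ^ 2) by (eapply Rlt_le_trans; [apply Hse| apply Rmin_r]).
  assert (Hl : ln s < 0) by (rewrite <- ln_1; apply ln_increasing; lra).
  apply Rle_lt_trans with (Rpower s (/ 2)).
  unfold Rpower. apply exp_mono. nra.
  rewrite Rpower_sqrt by auto. rewrite <- (sqrt_pow2 d) by lra. apply sqrt_lt_1_alt. lra.
Qed.

Lemma is_derive_Rpower s e : 0 < s -> is_derive (fun x => Rpower x e) s (e * Rpower s (e - 1)).
Proof. intros Hs. apply is_derive_Reals. now apply derivable_pt_lim_power. Qed.

Lemma singular (Q dQ : R -> R) b L a : 0 < b -> 0 < a -> 0 <= L ->
  (forall s, 0 < s <= b -> is_derive Q s (dQ s)) ->
  (forall s, 0 < s <= b -> Rabs (dQ s) <= L * Rpower s (a - 1)) ->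
  (forall d, 0 < d -> exists e, 0 < e < b /\ Rabs (Q e) <= d) ->
  Rabs (Q b) <= L / a * Rpower b a.
Proof.
  intros Hb Ha HL HD HB Hsm.
  apply Rle_plus_epsilon. intros d Hd. destruct (Hsm d Hd) as [e [He HQe]].
  set (P := fun s => L / a * Rpower s a).
  assert (HP : forall s, 0 < s -> is_derive P s (L * Rpower s (a - 1))).
  { intros s Hs. unfold P. eapply is_derive_eq. apply is_derive_scal. apply is_derive_Rpower; auto.
    field; lra. }
  assert (Pe : 0 <= P e) by (unfold P; apply Rmult_le_pos; [apply Rdiv_le_0_compat; lra| left; apply Rpower_pos]).
  assert (H1 : P e + Q e <= P b + Q b).
  { apply (mono_right (fun s => P s + Q s) (fun s => L * Rpower s (a - 1) + dQ s)). lra.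
    intros s Hs. apply @is_derive_plus. apply HP; lra. apply HD; lra.
    intros s Hs. specialize (HB s ltac:(lra)). apply Rabs_le_between in HB. lra. }
  assert (H2 : P e - Q e <= P b - Q b).
  { apply (mono_right (fun s => P s - Q s) (fun s => L * Rpower s (a - 1) - dQ s)). lra.
    intros s Hs. apply @is_derive_minus. apply HP; lra. apply HD; lra.
    intros s Hs. specialize (HB s ltac:(lra)). apply Rabs_le_between in HB. lra. }
  apply Rabs_le_between in HQe. fold (P b). apply Rabs_le. lra.
Qed.


Definition ScalHyp (f0 f1 f2 f3 : R -> R) (b K a : R) :=
  (forall s, 0 < s <= b -> is_derive f0 s (f1 s) /\ is_derive f1 s (f2 s) /\ is_derive f2 s (f3 s)) /\
  (forall s, 0 < s <= b -> Rabs (f1 s) <= K * Rpower s (a - 1) /\ Rabs (f2 s) <= K * Rpower s (a - 2)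
                          /\ Rabs (f3 s) <= K * Rpower s (a - 3)) /\
  (forall d, 0 < d -> exists e, 0 < e /\ forall s, 0 < s < e -> Rabs (f0 s - f0 0) < d).

Lemma small_Q (f0 g : R -> R) b C a : 0 < b -> 0 <= C -> 1 / 2 <= a ->
  (forall d, 0 < d -> exists e, 0 < e /\ forall s, 0 < s < e -> Rabs (f0 s - f0 0) < d) ->
  (forall s, 0 < s <= b -> Rabs (g s) <= C * Rpower s a) ->
  forall d, 0 < d -> exists e, 0 < e < b /\ Rabs (f0 e - f0 0 + g e) <= d.
Proof.
  intros Hb HC Ha Hc Hg d Hd.
  destruct (Hc (d / 2)) as [e1 [He1 H1]]. lra.
  destruct (small_pow a Ha (d / (2 * (C + 1)))) as [e2 [He2 H2]]. apply Rdiv_lt_0_compat; lra.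
  set (e := Rmin (Rmin e1 e2) b / 2).
  assert (Hm : 0 < Rmin (Rmin e1 e2) b) by (repeat apply Rmin_pos; auto).
  assert (Hm1 : Rmin (Rmin e1 e2) b <= e1) by (eapply Rle_trans; apply Rmin_l).
  assert (Hm2 : Rmin (Rmin e1 e2) b <= e2) by (eapply Rle_trans; [apply Rmin_l| apply Rmin_r]).
  assert (Hm3 : Rmin (Rmin e1 e2) b <= b) by apply Rmin_r.
  exists e. unfold e. split. lra.
  set (x := Rmin (Rmin e1 e2) b / 2) in *.
  specialize (H1 x ltac:(unfold x; lra)). specialize (H2 x ltac:(unfold x; lra)).
  specialize (Hg x ltac:(unfold x; lra)).
  assert (C * Rpower x a <= C * (d / (2 * (C + 1)))) by (apply Rmult_le_compat_l; lra).
  assert (C * (d / (2 * (C + 1))) <= d / 2).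
  { replace (C * (d / (2 * (C + 1)))) with ((C / (C + 1)) * (d / 2)) by (field; lra).
    assert (C / (C + 1) <= 1).
    { replace (C / (C + 1)) with (1 - 1 / (C + 1)) by (field; lra).
      assert (0 < 1 / (C + 1)) by (apply Rdiv_lt_0_compat; lra). lra. }
    assert (0 <= C / (C+1)) by (apply Rdiv_le_0_compat; lra).
    assert (C / (C + 1) * (d / 2) <= 1 * (d / 2)) by (apply Rmult_le_compat_r; lra). lra. }
  eapply Rle_trans. apply Rabs_triang. lra.
Qed.

Lemma scal1 f0 f1 f2 f3 b K a t1 : ScalHyp f0 f1 f2 f3 b K a -> 0 <= K -> 1 / 2 <= a <= 1 ->
  0 < t1 <= b -> Rabs (1 / t1 * (f0 t1 - f0 0) - f1 t1) <= K / a * Rpower t1 (a - 1).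
Proof.
  intros [HD [HB Hc]] HK Ha Ht.
  set (Q := fun s => f0 s - f0 0 - s * f1 s).
  assert (HQ : Rabs (Q t1) <= K / a * Rpower t1 a).
  { apply (singular Q (fun s => - (s * f2 s))); try lra.
    - intros s Hs. destruct (HD s ltac:(lra)) as [D0 [D1 D2]]. unfold Q.
      assert (E0 : Derive (fun x => f0 x) s = f1 s) by (apply is_derive_unique; exact D0).
      assert (E1 : Derive (fun x => f1 x) s = f2 s) by (apply is_derive_unique; exact D1).
      auto_derive. repeat split; try (eexists; eassumption). rewrite E0, E1. ring.
    - intros s Hs. destruct (HB s ltac:(lra)) as [_ [B2 _]].
      rewrite Rabs_Ropp, Rabs_mult, Rabs_right by lra.
      rewrite <- (Rpower_shift s (a - 1)) by lra. replace (a - 1 - 1) with (a - 2) by ring.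
      assert (0 <= s) by lra. 
      replace (K * (s * Rpower s (a - 2))) with (s * (K * Rpower s (a - 2))) by ring.
      apply Rmult_le_compat_l; auto.
    - intros d Hd.
      assert (Hg : forall s, 0 < s <= t1 -> Rabs (- (s * f1 s)) <= K * Rpower s a).
      { intros s Hs. destruct (HB s ltac:(lra)) as [B1 _].
        rewrite Rabs_Ropp, Rabs_mult, Rabs_right by lra.
        rewrite <- (Rpower_shift s a) by lra.
        replace (K * (s * Rpower s (a - 1))) with (s * (K * Rpower s (a - 1))) by ring.
        apply Rmult_le_compat_l; lra. }
      destruct (small_Q f0 (fun s => - (s * f1 s)) t1 K a ltac:(lra) HK ltac:(lra) Hc Hg d Hd) as [e [He HQ]].
      exists e. split; auto. }
  replace (1 / t1 * (f0 t1 - f0 0) - f1 t1) with (Q t1 / t1) by (unfold Q; field; lra).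
  unfold Rdiv at 1. rewrite Rabs_mult, (Rabs_right (/ t1)) by (apply Rle_ge, Rlt_le, Rinv_0_lt_compat; lra).
  rewrite <- (Rpower_shift t1 a) in HQ by lra.
  apply Rmult_le_reg_r with t1. lra.
  rewrite Rmult_assoc, Rinv_l by lra.
  replace (K / a * Rpower t1 (a - 1) * t1) with (K / a * (t1 * Rpower t1 (a - 1))) by ring. lra.
Qed.

Lemma kern_facts rho tau : 0 < rho -> 0 < tau ->
  0 <= (1 + 2 * rho) / (tau * (1 + rho)) /\ (1 + 2 * rho) / (tau * (1 + rho)) * tau <= 2.
Proof.
  intros Hr Ht. split. apply Rlt_le, Rdiv_lt_0_compat; nra.
  replace ((1 + 2 * rho) / (tau * (1 + rho)) * tau) with (2 - 1 / (1 + rho)) by (field; lra).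
  assert (0 < 1 / (1 + rho)) by (apply Rdiv_lt_0_compat; lra). lra.
Qed.

Lemma scal3 f0 f1 f2 f3 b K a p q r : ScalHyp f0 f1 f2 f3 b K a -> 0 <= K -> 1 / 2 <= a <= 1 ->
  0 < p -> p < q -> q < r -> r <= b ->
  let rho := (r - q) / (q - p) in
  Rabs ((1 + 2 * rho) / ((r - q) * (1 + rho)) * (f0 r - f0 q)
        + (- rho ^ 2) / ((r - q) * (1 + rho)) * (f0 q - f0 p) - f1 r)
   <= K * (2 * (r - q) ^ 2 * Rpower q (a - 3) + 1 / 2 * (q - p) ^ 2 * Rpower p (a - 3)).
Proof.
  intros [HD [HB Hc]] HK Ha Hp Hpq Hqr Hrb rho.
  eapply Rle_trans. apply (regular f0 f1 f2 f3 p q r (K * Rpower q (a - 3)) (K * Rpower p (a - 3))); auto.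
  - intros s Hs. apply HD. lra.
  - intros s Hs. destruct (HB s ltac:(lra)) as [_ [_ B3]]. eapply Rle_trans. apply B3.
    apply Rmult_le_compat_l; auto. apply Rpower_mono_neg; lra.
  - intros s Hs. destruct (HB s ltac:(lra)) as [_ [_ B3]]. eapply Rle_trans. apply B3.
    apply Rmult_le_compat_l; auto. apply Rpower_mono_neg; lra.
  - right. ring.
Qed.

Lemma scal2 f0 f1 f2 f3 b K a t1 t2 : ScalHyp f0 f1 f2 f3 b K a -> 0 <= K -> 1 / 2 <= a <= 1 ->
  0 < t1 -> t1 < t2 -> t2 <= b ->
  let rho := (t2 - t1) / t1 in
  Rabs ((1 + 2 * rho) / ((t2 - t1) * (1 + rho)) * (f0 t2 - f0 t1)
        + (- rho ^ 2) / ((t2 - t1) * (1 + rho)) * (f0 t1 - f0 0) - f1 t2)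
   <= (2 * rho ^ 2 + 1 / (2 * a)) * K * Rpower t1 (a - 1).
Proof.
  intros [HD [HB Hc]] HK Ha H1 H12 H2b rho.
  assert (Hrho : 0 < rho) by (unfold rho; apply Rdiv_lt_0_compat; lra).
  set (Q := fun s => f0 s - f0 0 - s * f1 s + s ^ 2 / 2 * f2 s).
  assert (HQ : Rabs (Q t1) <= K / 2 / a * Rpower t1 a).
  { apply (singular Q (fun s => s ^ 2 / 2 * f3 s)); try lra.
    - intros s Hs. destruct (HD s ltac:(lra)) as [D0 [D1 D2]]. unfold Q.
      assert (E0 : Derive (fun x => f0 x) s = f1 s) by (apply is_derive_unique; exact D0).
      assert (E1 : Derive (fun x => f1 x) s = f2 s) by (apply is_derive_unique; exact D1).
      assert (E2 : Derive (fun x => f2 x) s = f3 s) by (apply is_derive_unique; exact D2).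
      auto_derive. repeat split; try (eexists; eassumption). rewrite E0, E1, E2. field.
    - intros s Hs. destruct (HB s ltac:(lra)) as [_ [_ B3]].
      rewrite Rabs_mult, (Rabs_right (s ^ 2 / 2)) by (apply Rle_ge, Rdiv_le_0_compat; [apply pow2_ge_0| lra]).
      rewrite <- (Rpower_shift s (a - 1)) by lra. replace (a - 1 - 1) with ((a - 2)) by ring.
      rewrite <- (Rpower_shift s (a - 2)) by lra. replace (a - 2 - 1) with ((a - 3)) by ring.
      replace (K / 2 * (s * (s * Rpower s (a - 3)))) with (s ^ 2 / 2 * (K * Rpower s (a - 3))) by field.
      apply Rmult_le_compat_l; auto. apply Rdiv_le_0_compat; [apply pow2_ge_0| lra].
    - intros d Hd.
      assert (Hg : forall s, 0 < s <= t1 -> Rabs (- (s * f1 s) + s ^ 2 / 2 * f2 s) <= (3 / 2 * K) * Rpower s a).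
      { intros s Hs. destruct (HB s ltac:(lra)) as [B1 [B2 _]].
        eapply Rle_trans. apply Rabs_triang.
        rewrite Rabs_Ropp, !Rabs_mult, (Rabs_right s), (Rabs_right (s ^ 2 / 2)) by (apply Rle_ge; try apply Rdiv_le_0_compat; try apply pow2_ge_0; lra).
        assert (s * Rabs (f1 s) <= s * (K * Rpower s (a - 1))) by (apply Rmult_le_compat_l; lra).
        assert (s ^ 2 / 2 * Rabs (f2 s) <= s ^ 2 / 2 * (K * Rpower s (a - 2))) by (apply Rmult_le_compat_l; auto; apply Rdiv_le_0_compat; [apply pow2_ge_0| lra]).
        assert (E1 : s * (K * Rpower s (a - 1)) = K * Rpower s a) by (rewrite <- (Rpower_shift s a) by lra; ring).
        assert (E2 : s ^ 2 / 2 * (K * Rpower s (a - 2)) = K / 2 * Rpower s a).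
        { rewrite <- (Rpower_shift s a) by lra. rewrite <- (Rpower_shift s (a - 1)) by lra.
          replace (a - 1 - 1) with (a - 2) by ring. field. }
        lra. }
      destruct (small_Q f0 (fun s => - (s * f1 s) + s ^ 2 / 2 * f2 s) t1 (3 / 2 * K) a ltac:(lra) ltac:(lra) ltac:(lra) Hc Hg d Hd) as [e [He HQ]].
      exists e. split; auto. unfold Q. replace (f0 e - f0 0 - e * f1 e + e ^ 2 / 2 * f2 e) with (f0 e - f0 0 + (- (e * f1 e) + e ^ 2 / 2 * f2 e)) by ring. auto. }
  set (aa := (1 + 2 * rho) / ((t2 - t1) * (1 + rho))).
  destruct (kern_facts rho (t2 - t1) Hrho ltac:(lra)) as [Ha0 Ha2]. fold aa in Ha0, Ha2.
  assert (HR := right_part f0 f1 f2 f3 t1 t2 (K * Rpower t1 (a - 3)) aa H12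
     ltac:(intros s Hs; apply HD; lra)
     ltac:(intros s Hs; destruct (HB s ltac:(lra)) as [_ [_ B3]]; eapply Rle_trans; [apply B3|];
           apply Rmult_le_compat_l; auto; apply Rpower_mono_neg; lra) Ha0 Ha2).
  set (R0r := f0 t2 - f0 t1 - (t2 - t1) * f1 t1 - (t2 - t1) ^ 2 / 2 * f2 t1) in *.
  set (R1r := f1 t2 - f1 t1 - (t2 - t1) * f2 t1) in *.
  match goal with |- Rabs ?X <= _ => assert (Hid : X = (aa * R0r - R1r) + (rho / (1 + rho)) * (- (Q t1) / t1)) end.
  { unfold aa, R0r, R1r, Q, rho. field. lra. }
  rewrite Hid.
  set (P := Rpower t1 (a - 1)).
  assert (HP : 0 < P) by apply Rpower_pos.
  assert (E3 : Rpower t1 (a - 3) * (t2 - t1) ^ 2 = rho ^ 2 * P).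
  { unfold P. replace (t2 - t1) with (rho * t1) by (unfold rho; field; lra).
    rewrite <- (Rpower_shift t1 (a - 1)) by lra. rewrite <- (Rpower_shift t1 (a - 1 - 1)) by lra.
    replace (a - 1 - 1 - 1) with (a - 3) by ring. ring. }
  assert (E4 : Rpower t1 a = t1 * P) by (unfold P; rewrite Rpower_shift by lra; auto).
  assert (HQ2 : Rabs (rho / (1 + rho) * (- Q t1 / t1)) <= 1 / (2 * a) * K * P).
  { rewrite Rabs_mult. unfold Rdiv at 2. rewrite Rabs_mult, Rabs_Ropp, (Rabs_right (/ t1)) by (apply Rle_ge, Rlt_le, Rinv_0_lt_compat; lra).
    rewrite (Rabs_right (rho / (1 + rho))) by (apply Rle_ge, Rdiv_le_0_compat; lra).
    rewrite E4 in HQ.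
    assert (Rabs (Q t1) * / t1 <= K / 2 / a * P).
    { apply Rmult_le_reg_r with t1. lra. rewrite Rmult_assoc, Rinv_l by lra.
      replace (K / 2 / a * P * t1) with (K / 2 / a * (t1 * P)) by ring. lra. }
    assert (rho / (1 + rho) <= 1).
    { replace (rho / (1 + rho)) with (1 - 1 / (1 + rho)) by (field; lra).
      assert (0 < 1 / (1 + rho)) by (apply Rdiv_lt_0_compat; lra). lra. }
    assert (0 <= Rabs (Q t1) * / t1) by (apply Rmult_le_pos; [apply Rabs_pos| apply Rlt_le, Rinv_0_lt_compat; lra]).
    assert (0 <= rho / (1 + rho)) by (apply Rdiv_le_0_compat; lra).
    replace (1 / (2 * a) * K * P) with (K / 2 / a * P) by (field; lra).
    apply Rle_trans with (1 * (Rabs (Q t1) * / t1)). apply Rmult_le_compat_r; lra. lra. }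
  replace (5 / 6 * (K * Rpower t1 (a - 3)) * (t2 - t1) ^ 2) with (5 / 6 * K * (rho ^ 2 * P)) in HR
    by (rewrite <- E3; ring).
  assert (0 <= K * (rho ^ 2 * P)) by (apply Rmult_le_pos; auto; apply Rmult_le_pos; [apply pow2_ge_0| lra]).
  eapply Rle_trans. apply Rabs_triang.
  replace ((2 * rho ^ 2 + 1 / (2 * a)) * K * P) with (2 * (K * (rho ^ 2 * P)) + 1 / (2 * a) * K * P) by ring.
  replace (5 / 6 * K * (rho ^ 2 * P)) with (5 / 6 * (K * (rho ^ 2 * P))) in HR by ring.
  lra.
Qed.


Definition S1 (f : nat -> R) (m : nat) : R := sum_n_m f 1 m.

Lemma S1_0 f : S1 f 0 = 0.
Proof. unfold S1. rewrite sum_n_m_zero; [reflexivity|lia]. Qed.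

Lemma S1_S f m : S1 f (S m) = S1 f m + f (S m).
Proof. unfold S1. rewrite sum_n_Sm; [reflexivity|lia]. Qed.

Lemma S1_ext f g m : (forall i, (1 <= i <= m)%nat -> f i = g i) -> S1 f m = S1 g m.
Proof.
  induction m; intros H. now rewrite !S1_0.
  rewrite !S1_S, IHm, (H (S m)); auto; [lia|intros; apply H; lia].
Qed.

Lemma S1_le f g m : (forall i, (1 <= i <= m)%nat -> f i <= g i) -> S1 f m <= S1 g m.
Proof.
  induction m; intros H. rewrite !S1_0; lra.
  rewrite !S1_S. assert (H1 := H (S m)). assert (S1 f m <= S1 g m) by (apply IHm; intros; apply H; lia).
  assert (f (S m) <= g (S m)) by (apply H; lia). lra.
Qed.

Lemma S1_abs f m : Rabs (S1 f m) <= S1 (fun i => Rabs (f i)) m.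
Proof.
  induction m. rewrite !S1_0, Rabs_R0; lra.
  rewrite !S1_S. eapply Rle_trans. apply Rabs_triang. lra.
Qed.

Lemma S1_lin2 f g a b m : S1 (fun i => a * f i + b * g i) m = a * S1 f m + b * S1 g m.
Proof. induction m. rewrite !S1_0; ring. rewrite !S1_S, IHm; ring. Qed.

Lemma S1_scal f a m : S1 (fun i => a * f i) m = a * S1 f m.
Proof. induction m. rewrite !S1_0; ring. rewrite !S1_S, IHm; ring. Qed.

Lemma S1_quad h a b l m :
  S1 (fun i => h * (l * a i - b i) ^ 2) m =
  l^2 * S1 (fun i => h * a i ^ 2) m - 2 * l * S1 (fun i => h * a i * b i) m + S1 (fun i => h * b i ^ 2) m.
Proof. induction m. rewrite !S1_0; ring. rewrite !S1_S, IHm; ring. Qed.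

Lemma S1_nonneg f m : (forall i, (1 <= i <= m)%nat -> 0 <= f i) -> 0 <= S1 f m.
Proof. intros H. rewrite <- (S1_0 f). replace (S1 f 0) with (S1 (fun _ => 0) m).
 apply S1_le; auto. clear H. induction m. now rewrite S1_0. rewrite S1_S, IHm, !S1_0; ring. Qed.

Lemma CS h a b m : 0 < h ->
  Rabs (S1 (fun i => h * a i * b i) m) <=
  sqrt (S1 (fun i => h * a i ^ 2) m) * sqrt (S1 (fun i => h * b i ^ 2) m).
Proof.
  intros Hh.
  set (A := S1 (fun i => h * a i ^ 2) m). set (B := S1 (fun i => h * b i ^ 2) m).
  set (S := S1 (fun i => h * a i * b i) m).
  assert (Hq : forall l, 0 <= l^2 * A - 2 * l * S + B).
  { intros l. unfold A, B, S. rewrite <- S1_quad. apply S1_nonneg. intros. 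
    apply Rmult_le_pos. lra. apply pow2_ge_0. }
  assert (HA : 0 <= A). { apply S1_nonneg; intros; apply Rmult_le_pos; [lra|apply pow2_ge_0]. }
  assert (HB : 0 <= B). { apply S1_nonneg; intros; apply Rmult_le_pos; [lra|apply pow2_ge_0]. }
  assert (HS : S^2 <= A * B).
  { destruct (Req_dec A 0) as [H0|H0].
    - destruct (Req_dec S 0) as [HS0|HS0]. rewrite HS0, H0; lra.
      specialize (Hq ((B+1)/(2*S))). rewrite H0 in Hq.
      replace (((B + 1) / (2 * S)) ^ 2 * 0 - 2 * ((B + 1) / (2 * S)) * S + B) with (-1) in Hq by (field; auto). lra.
    - specialize (Hq (S / A)).
      replace ((S / A) ^ 2 * A - 2 * (S / A) * S + B) with (B - S^2 / A) in Hq by (field; auto).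
      assert (S^2/A <= B) by lra.
      apply Rmult_le_reg_r with (/A). apply Rinv_0_lt_compat; lra.
      replace (A * B * / A) with B by (field; auto). unfold Rdiv in H; lra. }
  rewrite <- sqrt_mult by auto. rewrite <- sqrt_Rsqr_abs. apply sqrt_le_1_alt. unfold Rsqr. lra.
Qed.

Lemma S1_deriv (c : nat -> R) (F : nat -> R -> R) (dF : nat -> R) s m :
  (forall i, (1 <= i <= m)%nat -> is_derive (F i) s (dF i)) ->
  is_derive (fun x => S1 (fun i => c i * F i x) m) s (S1 (fun i => c i * dF i) m).
Proof.
  induction m; intros H.
  - rewrite S1_0. apply is_derive_ext with (f := fun _ => 0). intros x. rewrite S1_0. reflexivity.
    apply (is_derive_const (K := R_AbsRing) (V := R_NormedModule) 0 s).
  - rewrite S1_S. apply is_derive_ext with (f := fun x => S1 (fun i => c i * F i x) m + c (S m) * F (S m) x).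
    intros x. rewrite S1_S. reflexivity.
    apply (@is_derive_plus R_AbsRing R_NormedModule). apply IHm. intros; apply H; lia.
    apply is_derive_scal. apply H; lia.
Qed.

Lemma S1_lin4 (c x y z w : nat -> R) c0 c1 m :
  S1 (fun i => c i * (c0 * (x i - y i) + c1 * (y i - z i) - w i)) m =
  c0 * (S1 (fun i => c i * x i) m - S1 (fun i => c i * y i) m)
  + c1 * (S1 (fun i => c i * y i) m - S1 (fun i => c i * z i) m) - S1 (fun i => c i * w i) m.
Proof. induction m. rewrite !S1_0; ring. rewrite !S1_S, IHm; ring. Qed.

Lemma S1_diff (c x y : nat -> R) m :
  S1 (fun i => c i * x i) m - S1 (fun i => c i * y i) m = S1 (fun i => c i * (x i - y i)) m.
Proof. induction m. rewrite !S1_0; ring. rewrite !S1_S, <- IHm; ring. Qed.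

Lemma ev_all (P : nat -> R -> Prop) m :
  (forall i, (1 <= i <= m)%nat -> at_right 0 (P i)) ->
  at_right 0 (fun s => forall i, (1 <= i <= m)%nat -> P i s).
Proof.
  induction m; intros H.
  - apply filter_forall. intros; lia.
  - eapply filter_imp. 2: apply filter_and; [apply IHm; intros; apply H; lia | apply (H (S m)); lia].
    intros s [H1 H2] i Hi. destruct (Nat.eq_dec i (S m)). subst; auto. apply H1; lia.
Qed.

Lemma at_right_ex (Q : R -> Prop) : at_right 0 Q -> exists d, 0 < d /\ forall s, 0 < s < d -> Q s.
Proof.
  intros [eps Heps]. exists eps. split. apply cond_pos.
  intros s Hs. apply Heps; [| lra]. unfold ball; simpl; unfold AbsRing_ball, abs, minus, plus, opp; simpl.
  rewrite Rabs_right; lra.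
Qed.

Definition phi (M : nat) (h : R) (e : nat -> R) (ud : nat -> nat -> R -> R) (k : nat) (s : R) :=
  S1 (fun i => h * e i * ud k i s) (M - 1).

Lemma vec_hyp (N M : nat) (h : R) (t : nat -> R) (ud : nat -> nat -> R -> R) (Cb alpha : R) (e : nat -> R) :
  0 < h ->
  (forall i k s, (1 <= i <= M - 1)%nat -> (k < 3)%nat -> 0 < s <= t N ->
            is_derive (ud k i) s (ud (S k) i s)) ->
  (forall i, (1 <= i <= M - 1)%nat ->
            filterlim (ud O i) (at_right 0) (locally (ud O i 0))) ->
  (forall k s, (1 <= k <= 3)%nat -> 0 < s <= t N ->
            dnorm M h (fun i => ud k i s) <= Cb * Rpower s (alpha - INR k)) ->
  ScalHyp (phi M h e ud 0) (phi M h e ud 1) (phi M h e ud 2) (phi M h e ud 3) (t N) (dnorm M h e * Cb) alpha.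
Proof.
  intros Hh Hder Hcont Hbnd.
  assert (HD : forall k s, (k < 3)%nat -> 0 < s <= t N -> is_derive (phi M h e ud k) s (phi M h e ud (S k) s)).
  { intros k s Hk Hs. unfold phi. apply (S1_deriv (fun i => h * e i) (fun i => ud k i) (fun i => ud (S k) i s)).
    intros; apply Hder; auto. }
  assert (HB : forall k s, (1 <= k <= 3)%nat -> 0 < s <= t N ->
     Rabs (phi M h e ud k s) <= dnorm M h e * Cb * Rpower s (alpha - INR k)).
  { intros k s Hk Hs. unfold phi. eapply Rle_trans. apply CS; auto.
    change (sqrt (S1 (fun i : nat => h * e i ^ 2) (M - 1))) with (dnorm M h e).
    change (sqrt (S1 (fun i : nat => h * ud k i s ^ 2) (M - 1))) with (dnorm M h (fun i => ud k i s)).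
    rewrite Rmult_assoc. apply Rmult_le_compat_l. apply sqrt_pos. apply (Hbnd k s Hk Hs). }
  split; [|split].
  - intros s Hs. repeat split; apply HD; auto.
  - intros s Hs. repeat split.
    + replace (alpha - 1) with (alpha - INR 1) by (simpl; ring). apply HB; auto; lia.
    + replace (alpha - 2) with (alpha - INR 2) by (simpl; ring). apply HB; auto; lia.
    + replace (alpha - 3) with (alpha - INR 3) by (simpl; ring). apply HB; auto; lia.
  - intros d Hd.
    set (C := S1 (fun i => Rabs (h * e i)) (M - 1)).
    assert (HC : 0 <= C) by (apply S1_nonneg; intros; apply Rabs_pos).
    set (dd := d / (C + 1)).
    assert (Hdd : 0 < dd) by (apply Rdiv_lt_0_compat; lra).
    assert (Hev : at_right 0 (fun s => forall i, (1 <= i <= M - 1)%nat -> Rabs (ud 0%nat i s - ud 0%nat i 0) < dd)).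
    { apply ev_all. intros i Hi. specialize (Hcont i Hi). apply filterlim_locally with (eps := mkposreal dd Hdd) in Hcont.
      eapply filter_imp. 2: exact Hcont. intros s Hs. exact Hs. }
    destruct (at_right_ex _ Hev) as [d0 [Hd0 H0]]. exists d0. split; auto.
    intros s Hs. unfold phi. rewrite S1_diff. eapply Rle_lt_trans. apply S1_abs.
    apply Rle_lt_trans with (S1 (fun i => Rabs (h * e i) * dd) (M - 1)).
    + apply S1_le. intros i Hi. rewrite Rabs_mult.
      apply Rmult_le_compat_l. apply Rabs_pos. left. apply H0; auto.
    + rewrite (S1_ext _ (fun i => dd * Rabs (h * e i))) by (intros; ring). rewrite S1_scal. fold C.
      unfold dd. replace (d / (C + 1) * C) with (d * (C / (C + 1))) by (field; lra).
      assert (C / (C + 1) < 1).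
      { replace (C / (C + 1)) with (1 - 1 / (C + 1)) by (field; lra).
        assert (0 < 1 / (C + 1)) by (apply Rdiv_lt_0_compat; lra). lra. }
      nra.
Qed.


Lemma S1_zero m : S1 (fun _ => 0) m = 0.
Proof. induction m. apply S1_0. rewrite S1_S, IHm; ring. Qed.

Lemma D2_1 t v : D2 t v 1 = 1 / tau t 1 * (v 1%nat - v 0%nat).
Proof. unfold D2. rewrite sum_n_n. reflexivity. Qed.

Lemma D2_2 t v j : (2 <= j)%nat ->
  D2 t v j = bdf2_kernel t j 0 * (v j - v (j - 1)%nat) + bdf2_kernel t j 1 * (v (j - 1)%nat - v (j - 2)%nat).
Proof.
  intros Hj. destruct j as [|[|j]]; try lia.
  unfold D2. change (sum_n_m ?f 1 ?m) with (S1 f m). rewrite !S1_S.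
  rewrite (S1_ext _ (fun _ => 0)), S1_zero.
  - replace (S (S j) - S (S j))%nat with 0%nat by lia. replace (S (S j) - S j)%nat with 1%nat by lia.
    replace (S (S j) - 1)%nat with (S j) by lia. replace (S (S j) - 2)%nat with j by lia.
    replace (S j - 1)%nat with j by lia. ring.
  - intros i Hi. replace (S (S j) - i)%nat with (S (S (j - i))) by lia. simpl. ring.
Qed.

Lemma kern0 t j : (2 <= j)%nat -> bdf2_kernel t j 0 = (1 + 2 * ratio t j) / (tau t j * (1 + ratio t j)).
Proof. intros. destruct j as [|[|j]]; try lia. reflexivity. Qed.
Lemma kern1 t j : (2 <= j)%nat -> bdf2_kernel t j 1 = - (ratio t j ^ 2) / (tau t j * (1 + ratio t j)).
Proof. intros. destruct j as [|[|j]]; try lia. reflexivity. Qed.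

Lemma finish D X Y : 0 <= Y -> D = sqrt X -> 0 <= X -> X <= D * Y -> D <= Y.
Proof.
  intros HY HD HX H. assert (D * D = X) by (subst; apply sqrt_sqrt; auto).
  assert (0 <= D) by (subst; apply sqrt_pos). nra.
Qed.

Lemma tmono N (t : nat -> R) : (forall k, (k < N)%nat -> t k < t (S k)) ->
  forall k m, (k <= N)%nat -> (m < k)%nat -> t m < t k.
Proof.
  intros H k. induction k; intros m Hk Hm. lia.
  destruct (Nat.eq_dec m k). subst. apply H; lia.
  eapply Rlt_trans. apply IHk; lia. apply H; lia.
Qed.

Lemma norm_id M h (e : nat -> R) (ud : nat -> nat -> R -> R) c0 c1 j :
  (forall i, e i = c0 * (ud 0%nat i (j 0%nat) - ud 0%nat i (j 1%nat)) + c1 * (ud 0%nat i (j 1%nat) - ud 0%nat i (j 2%nat)) - ud 1%nat i (j 0%nat)) ->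
  S1 (fun i => h * e i ^ 2) (M - 1) =
  c0 * (phi M h e ud 0 (j 0%nat) - phi M h e ud 0 (j 1%nat)) + c1 * (phi M h e ud 0 (j 1%nat) - phi M h e ud 0 (j 2%nat))
  - phi M h e ud 1 (j 0%nat).
Proof.
  intros He. unfold phi. rewrite <- S1_lin4. apply S1_ext. intros i _. rewrite <- He. ring.
Qed.

Theorem mainTheorem10
  (N M : nat) (h : R) (t : nat -> R) (ud : nat -> nat -> R -> R) (Cb alpha : R)
  (HN : (1 <= N)%nat) (HM : (2 <= M)%nat) (Hh : 0 < h)
  (Ht0 : t O = 0) (Hmono : forall k, (k < N)%nat -> t k < t (S k))
  (HC : 0 < Cb) (Ha : 1 / 2 <= alpha <= 1)
  (Hder : forall i k s, (1 <= i <= M - 1)%nat -> (k < 3)%nat -> 0 < s <= t N ->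
            is_derive (ud k i) s (ud (S k) i s))
  (Hcont : forall i, (1 <= i <= M - 1)%nat ->
            filterlim (ud O i) (at_right 0) (locally (ud O i 0)))
  (Hbnd : forall k s, (1 <= k <= 3)%nat -> 0 < s <= t N ->
            dnorm M h (fun i => ud k i s) <= Cb * Rpower s (alpha - INR k)) :
  (forall j, (3 <= j <= N)%nat ->
     dnorm M h (eta t ud j)
       <= 2 * Cb * tau t j ^ 2 * Rpower (t (j - 1)%nat) (alpha - 3)
          + 1 / 2 * Cb * tau t (j - 1)%nat ^ 2 * Rpower (t (j - 2)%nat) (alpha - 3))
  /\ ((2 <= N)%nat ->
     dnorm M h (eta t ud 2)
       <= (2 * ratio t 2 ^ 2 + 1 / (2 * alpha)) * Cb * Rpower (tau t 1) (alpha - 1))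
  /\ dnorm M h (eta t ud 1) <= Cb / alpha * Rpower (tau t 1) (alpha - 1).
Proof.
  assert (Tm := tmono N t Hmono).
  assert (Tp : forall k, (1 <= k <= N)%nat -> 0 < t k) by (intros k Hk; rewrite <- Ht0; apply Tm; lia).
  assert (Tle : forall k, (k <= N)%nat -> t k <= t N).
  { intros k Hk. destruct (Nat.eq_dec k N). subst; lra. left; apply Tm; lia. }
  assert (Hd0 : forall e, 0 <= dnorm M h e) by (intros; apply sqrt_pos).
  assert (HX : forall e, 0 <= S1 (fun i => h * e i ^ 2) (M - 1))
    by (intros; apply S1_nonneg; intros; apply Rmult_le_pos; [lra | apply pow2_ge_0]).
  split; [|split].
  - intros j Hj. set (e := eta t ud j).
    assert (SH := vec_hyp N M h t ud Cb alpha e Hh Hder Hcont Hbnd).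
    assert (Hid := norm_id M h e ud (bdf2_kernel t j 0) (bdf2_kernel t j 1)
       (fun k => match k with 0%nat => t j | 1%nat => t (j - 1)%nat | _ => t (j - 2)%nat end)
       ltac:(intros i; unfold e, eta; rewrite D2_2 by lia; reflexivity)).
    cbv beta iota in Hid.
    rewrite kern0, kern1 in Hid by lia.
    pose proof (scal3 _ _ _ _ _ _ _ (t (j - 2)%nat) (t (j - 1)%nat) (t j) SH
       ltac:(apply Rmult_le_pos; [apply Hd0| lra]) Ha
       ltac:(apply Tp; lia) ltac:(apply Tm; lia) ltac:(apply Tm; lia) ltac:(apply Tle; lia)) as S3.
    cbv zeta in S3.
    unfold ratio, tau in Hid. replace (j - 1 - 1)%nat with (j - 2)%nat in Hid by lia.
    rewrite <- Hid in S3. rewrite Rabs_right in S3 by (apply Rle_ge; apply HX).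
    unfold tau. replace (j - 1 - 1)%nat with (j - 2)%nat by lia.
    replace (2 * Cb * (t j - t (j - 1)%nat) ^ 2 * Rpower (t (j - 1)%nat) (alpha - 3) +
      1 / 2 * Cb * (t (j - 1)%nat - t (j - 2)%nat) ^ 2 * Rpower (t (j - 2)%nat) (alpha - 3))
     with (Cb * (2 * (t j - t (j - 1)%nat) ^ 2 * Rpower (t (j - 1)%nat) (alpha - 3) +
      1 / 2 * (t (j - 1)%nat - t (j - 2)%nat) ^ 2 * Rpower (t (j - 2)%nat) (alpha - 3))) by ring.
    eapply finish; [| reflexivity | apply HX | rewrite Rmult_assoc in S3; exact S3].
    apply Rmult_le_pos; [lra|]. apply Rplus_le_le_0_compat; apply Rmult_le_pos;
      try (apply Rmult_le_pos; [lra| apply pow2_ge_0]); left; apply Rpower_pos.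
  - intros HN2. set (e := eta t ud 2).
    assert (SH := vec_hyp N M h t ud Cb alpha e Hh Hder Hcont Hbnd).
    assert (Hid := norm_id M h e ud (bdf2_kernel t 2 0) (bdf2_kernel t 2 1)
       (fun k => match k with 0%nat => t 2%nat | 1%nat => t 1%nat | _ => t 0%nat end)
       ltac:(intros i; unfold e, eta; rewrite D2_2 by lia; reflexivity)).
    cbv beta iota in Hid.
    rewrite kern0, kern1 in Hid by lia.
    unfold ratio, tau in Hid. change (2 - 1)%nat with 1%nat in Hid. change (1 - 1)%nat with 0%nat in Hid.
    rewrite Ht0, Rminus_0_r in Hid.
    assert (T1 := Tp 1%nat ltac:(lia)). assert (T2 := Tm 2%nat 1%nat ltac:(lia) ltac:(lia)).
    pose proof (scal2 _ _ _ _ _ _ _ (t 1%nat) (t 2%nat) SH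
       ltac:(apply Rmult_le_pos; [apply Hd0| lra]) Ha T1 T2 ltac:(apply Tle; lia)) as S2.
    cbv zeta in S2. rewrite <- Hid in S2. rewrite Rabs_right in S2 by (apply Rle_ge; apply HX).
    unfold ratio, tau. change (2 - 1)%nat with 1%nat. change (1 - 1)%nat with 0%nat. rewrite Ht0, Rminus_0_r.
    assert (0 < alpha) by lra.
    eapply finish; [| reflexivity | apply HX | ].
    + apply Rmult_le_pos; [apply Rmult_le_pos|left; apply Rpower_pos]; [|lra].
      apply Rplus_le_le_0_compat. apply Rmult_le_pos; [lra| apply pow2_ge_0].
      apply Rlt_le, Rdiv_lt_0_compat; lra.
    + eapply Rle_trans. apply S2. right. ring.
  - set (e := eta t ud 1).
    assert (SH := vec_hyp N M h t ud Cb alpha e Hh Hder Hcont Hbnd).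
    assert (Hid := norm_id M h e ud (1 / tau t 1) 0
       (fun k => match k with 0%nat => t 1%nat | _ => t 0%nat end)
       ltac:(intros i; unfold e, eta; rewrite D2_1; ring)).
    cbv beta iota in Hid. unfold tau in Hid. change (1 - 1)%nat with 0%nat in Hid.
    rewrite Ht0, Rminus_0_r in Hid.
    assert (T1 := Tp 1%nat ltac:(lia)).
    pose proof (scal1 _ _ _ _ _ _ _ (t 1%nat) SH
       ltac:(apply Rmult_le_pos; [apply Hd0| lra]) Ha ltac:(split; [lra| apply Tle; lia])) as S1'.
    replace (1 / t 1%nat * (phi M h e ud 0 (t 1%nat) - phi M h e ud 0 0) - phi M h e ud 1 (t 1%nat))
      with (S1 (fun i => h * e i ^ 2) (M - 1)) in S1' by (rewrite Hid; ring).
    rewrite Rabs_right in S1' by (apply Rle_ge; apply HX).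
    unfold tau. change (1 - 1)%nat with 0%nat. rewrite Ht0, Rminus_0_r.
    assert (0 < alpha) by lra.
    eapply finish; [| reflexivity | apply HX | ].
    + apply Rmult_le_pos; [|left; apply Rpower_pos]. apply Rlt_le, Rdiv_lt_0_compat; lra.
    + eapply Rle_trans. apply S1'. right. field. lra.
Qed.
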